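(* Let $p$ be an odd prime and $r\ge1$ odd. (i) If $p\equiv -1\pmod 8$, then $K=\begin{pmatrix}\frac{4}{p^r}&1\\1&\frac{p^r+1}{4}\end{pmatrix}^{-1}$ is an even integral positive-definite matrix whose lattice has discriminant form isometric to $A_{p^r}$ (and signature $2$). (ii) If $p\equiv -3\pmod 8$, then $K=\begin{pmatrix}\frac4{p^r}&1&0&0\\1&\frac{p^r+3}{4}&1&0\\0&1&2&1\\0&0&1&2\end{pmatrix}^{-1}$ is an even integral positive-definite matrix whose lattice has discriminant form isometric to $A_{p^r}$ (signature $4$). (iii) If $p\equiv 3\pmod 8$, then $K=\begin{pmatrix}\frac{2}{p^r}&1\\1&\frac{p^r+1}{2}\end{pmatrix}^{-1}$ is an even integral positive-definite matrix whose lattice has discriminant form isometric to $B_{p^r}$ (signature $2$). (iv) For every even $r\ge 2$, $K=\begin{pmatrix}\frac{3}{2^r}&1&0\\1&\frac{2^r+2}{3}&1\\0&1&2\end{pmatrix}^{-1}$ is an even integral positive-definite matrix whose lattice has discriminant form isometric to $D_{2^r}$ (signature $3$).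
   Context: For an even positive-definite integral symmetric $n\times n$ matrix $K$, the lattice $L=\mathbb{Z}^n$ with form $x^TKy$ has discriminant group $L^*/L\cong\mathbb{Z}^n/K\mathbb{Z}^n$ and discriminant form $q_L(x+L)=\tfrac12 x^TKx\in\mathbb{Q}/\mathbb{Z}$ for $x\in L^*=K^{-1}\mathbb{Z}^n$ (in coordinates, $q_L$ of the class of $K^{-1}e_i$ is $\tfrac12(K^{-1})_{ii}$). Metric groups: $A_{p^r}=(\mathbb{Z}/p^r, mx^2/p^r)$ with $\gcd(m,p)=1$, $\left(\frac{2m}{p}\right)=1$; $B_{p^r}=(\mathbb{Z}/p^r, nx^2/p^r)$ with $\gcd(n,p)=1$, $\left(\frac{2n}{p}\right)=-1$; $D_{2^r}=(\mathbb{Z}/2^r,-5x^2/2^{r+1})$. *)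

(* Defs.v *)
From HB Require Import structures.
From mathcomp Require Import all_boot all_order all_algebra.
Set Implicit Arguments. Unset Strict Implicit. Unset Printing Implicit Defensive.
Import Order.TTheory GRing.Theory Num.Theory.
Local Open Scope ring_scope.

Definition mxl (n : nat) (s : seq (seq rat)) : 'M[rat]_n :=
  \matrix_(i < n, j < n) nth 0 (nth [::] s i) j.

(* Integer column vectors seen as rational vectors (elements of L = Z^n). *)
Definition intvec n (x : 'cV[int]_n) : 'cV[rat]_n := map_mx (fun z : int => z%:~R) x.

Definition bform n (A : 'M[rat]_n) (x y : 'cV[rat]_n) : rat := (x^T *m A *m y) 0 0.

Definition integral_mx n (K : 'M[rat]_n) : Prop := forall i j, K i j \is a Num.int.

Definition symmetric_mx n (K : 'M[rat]_n) : Prop := K^T = K.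

Definition even_mx n (K : 'M[rat]_n) : Prop :=
  forall x : 'cV[int]_n, bform K (intvec x) (intvec x) / 2%:R \is a Num.int.

Definition posdef_mx n (K : 'M[rat]_n) : Prop :=
  forall x : 'cV[rat]_n, x != 0 -> 0 < bform K x x.

Definition even_posdef_lattice n (K : 'M[rat]_n) : Prop :=
  [/\ integral_mx K, symmetric_mx K, even_mx K & posdef_mx K].

(* Discriminant form: L*/L = K^{-1} Z^n / Z^n, identified with Z^n / K Z^n
   via y |-> K^{-1} y; q_L(K^{-1} y + L) = 1/2 y^T K^{-1} y  (in Q/Z). *)
Definition qL n (K : 'M[rat]_n) (y : 'cV[int]_n) : rat :=
  2%:R^-1 * bform (invmx K) (intvec y) (intvec y).

(* The discriminant form of K is isometric to the cyclic metric group
   (Z/N, a x^2) (values in Q/Z): there is a surjective group homomorphism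
   Z^n -> Z/N with kernel K Z^n (hence inducing an isomorphism
   Z^n/KZ^n ~= Z/N) carrying q_L to x |-> a x^2 mod Z. *)
Definition disc_iso_cyclic n (K : 'M[rat]_n) (N : nat) (a : rat) : Prop :=
  exists phi : 'cV[int]_n -> 'Z_N,
    [/\ forall x y, phi (x + y) = phi x + phi y,
        forall k : 'Z_N, exists x, phi x = k,
        forall x, phi x = 0 <-> exists y : 'cV[int]_n, intvec x = K *m intvec y
      & forall x, qL K x - a * (val (phi x))%:R ^+ 2 \is a Num.int].

(* a is a quadratic residue mod p (for p prime: Legendre symbol (a/p) = 1) *)
Definition is_qr (p : nat) (a : int) : Prop :=
  coprimez a p /\ exists x : int, (x ^+ 2 = a %[mod p])%Z.
Definition is_qnr (p : nat) (a : int) : Prop :=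
  coprimez a p /\ ~ (exists x : int, (x ^+ 2 = a %[mod p])%Z).

Definition disc_is_A n (K : 'M[rat]_n) (p r : nat) : Prop :=
  exists m : int, [/\ coprimez m p, is_qr p (2 * m)
                    & disc_iso_cyclic K (p ^ r) (m%:~R / (p ^ r)%:R)].
Definition disc_is_B n (K : 'M[rat]_n) (p r : nat) : Prop :=
  exists m : int, [/\ coprimez m p, is_qnr p (2 * m)
                    & disc_iso_cyclic K (p ^ r) (m%:~R / (p ^ r)%:R)].
Definition disc_is_D n (K : 'M[rat]_n) (r : nat) : Prop :=
  disc_iso_cyclic K (2 ^ r) (- 5%:R / (2 ^ r.+1)%:R).

(* Main.v *)
Require Import Defs.
From HB Require Import structures.
From mathcomp Require Import all_boot all_order all_algebra all_field.
From mathcomp Require Import ring lra zify.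
Set Implicit Arguments. Unset Strict Implicit. Unset Printing Implicit Defensive.
Import Order.TTheory GRing.Theory Num.Theory.
Local Open Scope ring_scope.

Lemma sum2 (R : nmodType) (F : 'I_2 -> R) :
  \sum_(i < 2) F i = F (inord 0) + F (inord 1).
Proof.
rewrite !big_ord_recl big_ord0 addr0.
by congr (F _ + F _); apply/val_inj; rewrite /= inordK.
Qed.

Lemma sum3 (R : nmodType) (F : 'I_3 -> R) :
  \sum_(i < 3) F i = F (inord 0) + F (inord 1) + F (inord 2).
Proof.
rewrite !big_ord_recl big_ord0 addr0 addrA.
by congr (F _ + F _ + F _); apply/val_inj; rewrite /= inordK.
Qed.

Lemma sum4 (R : nmodType) (F : 'I_4 -> R) :
  \sum_(i < 4) F i = F (inord 0) + F (inord 1) + F (inord 2) + F (inord 3).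
Proof.
rewrite !big_ord_recl big_ord0 addr0 !addrA.
by congr (F _ + F _ + F _ + F _); apply/val_inj; rewrite /= inordK.
Qed.

Lemma mxlE n s i j : mxl n s i j = nth 0 (nth [::] s i) j.
Proof. by rewrite mxE. Qed.

Lemma bformE n (A : 'M[rat]_n) x y :
  bform A x y = \sum_j \sum_i x i 0 * A i j * y j 0.
Proof.
rewrite /bform !mxE; apply: eq_bigr => j _; rewrite !mxE mulr_suml.
by apply: eq_bigr => i _; rewrite mxE.
Qed.

Lemma intvecE n (x : 'cV[int]_n) i : intvec x i 0 = (x i 0)%:~R.
Proof. by rewrite mxE. Qed.

Lemma inv_of n (G K : 'M[rat]_n) : G *m K = 1%:M -> invmx G = K.
Proof.
move=> GK; have [Gu _] := mulmx1_unit GK.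
by rewrite -[invmx G]mulmx1 -GK mulmxA mulVmx // mul1mx.
Qed.

Lemma kernel_gen n (K G : 'M[rat]_n) : K *m G = 1%:M -> forall x : 'cV[int]_n,
  (exists y, intvec x = K *m intvec y) <-> (forall i, (G *m intvec x) i 0 \is a Num.int).
Proof.
move=> KG x; have GK := mulmx1C KG; split.
  case=> y Hy i; rewrite Hy mulmxA GK mul1mx intvecE; exact: intr_int.
move=> H; exists (\col_i Num.floor ((G *m intvec x) i 0)).
have -> : intvec (\col_i Num.floor ((G *m intvec x) i 0)) = G *m intvec x.
  by apply/matrixP => i j; rewrite ord1 [LHS]mxE [in LHS]mxE; apply: floorK; apply: H.
by rewrite mulmxA KG mul1mx.
Qed.

Lemma Zp_intr N (z : int) : (1 < N)%N -> (val (z%:~R : 'Z_N))%:Z = (z %% N)%Z.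
Proof.
move=> N1.
have N0 : (N%:Z != 0) by case: N N1.
have NR : (N%:R : 'Z_N) = 0 by apply/val_inj; rewrite /= val_Zp_nat // modnn.
have -> : (z%:~R : 'Z_N) = ((z %% N)%Z)%:~R.
  by rewrite {1}(divz_eq z N) intrD intrM -pmulrn NR mulr0 add0r.
have : 0 <= (z %% N)%Z by rewrite modz_ge0.
have : ((z %% N)%Z < N)%R by rewrite ltz_pmod // ltz_nat ltnW.
case: (z %% N)%Z => // k; rewrite ltz_nat => kN _.
rewrite -pmulrn; congr Posz; exact: (etrans (val_Zp_nat N1 k) (modn_small kN)).
Qed.

Lemma intr_natr (k : nat) : ((Posz k)%:~R : rat) = k%:R.
Proof. by rewrite -pmulrn. Qed.

Lemma disc_gen n (K G : 'M[rat]_n) (i0 : 'I_n) (N e : nat) (m c : int) :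
  (1 < N)%N -> (e == 1)%N || (e == 2)%N -> (e %| N)%N ->
  G *m K = 1%:M -> coprimez c N ->
  (forall x : 'cV[int]_n,
     (forall i, (G *m intvec x) i 0 \is a Num.int) <-> (N%:Z %| x i0 0%R)%Z) ->
  (forall x : 'cV[int]_n, 2%:R^-1 * bform G (intvec x) (intvec x)
        - (m * c ^+ 2 * (x i0 0) ^+ 2)%:~R / (N * e)%:R \is a Num.int) ->
  disc_iso_cyclic K N (m%:~R / (N * e)%:R).
Proof.
move=> N1 e12 eN GK cN Hker Hq.
have KG := mulmx1C GK; have iK : invmx K = G := inv_of KG.
have N0 : (N%:Z != 0) by rewrite eqz_nat -lt0n (ltnW N1).
have NR0 : (N%:R : rat) != 0 by rewrite pnatr_eq0 -lt0n (ltnW N1).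
exists (fun x => ((c * x i0 0)%:~R : 'Z_N)); split.
- by move=> x y; rewrite mxE mulrDr intrD.
- move=> k.
  have [u [v Huv]] := Bezoutz c N.
  move/eqP: cN => cN; rewrite cN in Huv.
  exists (const_mx (u * (val k)%:Z)); rewrite mxE.
  apply: val_inj.
  have : Posz (val ((c * (u * (val k)%:Z))%:~R : 'Z_N)) = Posz (val k).
    rewrite Zp_intr //.
    have -> : c * (u * (val k)%:Z) = (- (v * (val k)%:Z)) * N + (val k)%:Z.
      by rewrite -[X in _ = _ + X]mul1r -Huv; ring.
    rewrite modzMDl modz_small //; apply/andP; split => //.
    rewrite ltz_nat; have kl := ltn_ord k; move: kl.
    by rewrite [X in (_ < X)%N -> _](Zp_cast N1).
  by case.
- move=> x; rewrite (kernel_gen KG) Hker; split.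
    move=> H; have : Posz (val ((c * x i0 0)%:~R : 'Z_N)) = Posz 0 by rewrite H.
    rewrite Zp_intr // => /dvdz_mod0P.
    by rewrite Gauss_dvdzr // coprimez_sym.
  move=> H; apply: val_inj.
  have : Posz (val ((c * x i0 0)%:~R : 'Z_N)) = Posz 0.
    by rewrite Zp_intr //; apply/dvdz_mod0P; rewrite dvdz_mull.
  by case.
- move=> x; rewrite /qL iK -intr_natr Zp_intr //.
  set w := c * x i0 0.
  have -> : (w %% N)%Z = w - (w %/ N)%Z * N by rewrite {2}(divz_eq w N); ring.
  set q := (w %/ N)%Z.
  case/dvdnP: eN => N2 NE.
  case/orP: e12 => /eqP ee; subst e.
    have -> : 2%:R^-1 * bform G (intvec x) (intvec x) - m%:~R / (N * 1)%:R * (w - q * N)%:~R ^+ 2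
       = (2%:R^-1 * bform G (intvec x) (intvec x) - (m * c ^+ 2 * x i0 0 ^+ 2)%:~R / (N * 1)%:R)
         + (2 * m * w * q - m * q ^+ 2 * N)%:~R.
      rewrite /w !(rmorphD, rmorphM, rmorphB, rmorphXn, rmorphN) /= -intr_natr ?muln1 ?natrM ?mulr1.
      by field.
    by rewrite rpredD ?Hq ?intr_int.
  have -> : 2%:R^-1 * bform G (intvec x) (intvec x) - m%:~R / (N * 2)%:R * (w - q * N)%:~R ^+ 2
     = (2%:R^-1 * bform G (intvec x) (intvec x) - (m * c ^+ 2 * x i0 0 ^+ 2)%:~R / (N * 2)%:R)
       + (m * w * q - m * q ^+ 2 * N2)%:~R.
    have N20 : (N2%:R : rat) != 0 by move: NR0; rewrite NE natrM mulf_eq0 negb_or => /andP[].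
    rewrite /w !(rmorphD, rmorphM, rmorphB, rmorphXn, rmorphN) /= -intr_natr NE !natrM.
    by field.
  by rewrite rpredD ?Hq ?intr_int.
Qed.



Lemma fact_split f :
  ((f.*2)`! = (\prod_(k < f) (k.*2.+2)) * (\prod_(k < f) (k.*2.+1)))%N.
Proof.
elim: f => [|f IH]; first by rewrite !big_ord0.
rewrite !big_ord_recr /= doubleS !factS IH. ring.
Qed.

Lemma prod_even h : (\prod_(k < h) (k.*2.+2) = 2 ^ h * h`!)%N.
Proof.
elim: h => [|h IH]; first by rewrite big_ord0.
rewrite big_ord_recr /= IH factS expnS; lia.
Qed.

Lemma not_dvd_fact p n : prime p -> (n < p)%N -> ~~ (p %| n`!)%N.
Proof.
move=> pp; elim: n => [|n IH] np.
  rewrite fact0 dvdn1; apply/negP => /eqP p1; by rewrite p1 in pp.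
by rewrite factS Euclid_dvdM // negb_or IH ?(ltnW np) // andbT gtnNdvd.
Qed.

Lemma Fp_int_mod p (a b : int) : prime p -> (a = b %[mod p])%Z ->
  (a%:~R : 'F_p) = b%:~R.
Proof.
move=> pp ab.
have pR : (p%:R : 'F_p) = 0 by rewrite pchar_Fp_0.
rewrite (divz_eq a p) (divz_eq b p) ab !intrD !intrM -!pmulrn pR !mulr0.
by rewrite !add0r.
Qed.

Lemma two_qnr p : prime p -> (p %% 8 = 3)%N ->
  ~ exists x : int, (x ^+ 2 = 2 %[mod p])%Z.
Proof.
move=> pp p8 [x Hx].
have pR : (p%:R : 'F_p) = 0 by rewrite pchar_Fp_0.
set t := (p %/ 8)%N.
have pE : p = (8 * t + 3)%N by rewrite {1}(divn_eq p 8) p8; lia.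
set f := t.*2; set g := (t.*2).+1; set h := (f + g)%N.
have pE2 : p = (h.*2.+1)%N by rewrite pE /h /f /g; lia.
set y : 'F_p := x%:~R.
have y2 : y ^+ 2 = 2%:R.
  by rewrite /y -rmorphXn /= (Fp_int_mod pp Hx) -pmulrn.
have two0 : (2%:R : 'F_p) != 0.
  apply/negP => /eqP H; have := congr1 (@nat_of_ord _) H; rewrite val_Fp_nat //= modn_small //.
  by rewrite pE; lia.
have y0 : y != 0 by apply: contraNneq two0 => y0; rewrite -y2 y0 expr0n.
have ferm : y ^+ p = y by rewrite -{2}(expf_card y) card_Fp.
have twoh : (2%:R : 'F_p) ^+ h = 1.
  rewrite -y2 -exprM; apply: (mulIf y0); rewrite mul1r -exprSr.
  by rewrite mul2n -pE2 ferm.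
have hf0 : (h`!%:R : 'F_p) != 0.
  apply/negP => /eqP H; have := congr1 (@nat_of_ord _) H; rewrite val_Fp_nat //= => /eqP.
  move=> H0; have : (h < p)%N by rewrite pE2; lia.
  by move/(not_dvd_fact pp); rewrite /dvdn H0.
have gauss : (2%:R : 'F_p) ^+ h * h`!%:R = - h`!%:R.
  rewrite -natrX -natrM -prod_even.
  rewrite {1}/h big_split_ord /= natrM !natr_prod.
  have -> : \prod_(i < g) ((rshift f i : nat).*2.+2)%:R
           = \prod_(i < g) (- (i : nat).*2.+1%:R : 'F_p).
    rewrite (reindex_inj rev_ord_inj) /=; apply: eq_bigr => i _.
    apply/eqP; rewrite -addr_eq0 -natrD; apply/eqP.
    have -> : (((f + (g - i.+1)).*2.+2) + (i.*2.+1) = p)%N.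
      rewrite pE2 /h; have := ltn_ord i; lia.
    exact: pR.
  have -> : \prod_(i < g) (- (i : nat).*2.+1%:R : 'F_p)
      = (-1) ^+ g * \prod_(i < g) (i : nat).*2.+1%:R.
    rewrite (eq_bigr (fun i : 'I_g => (-1) * (i : nat).*2.+1%:R)); last first.
      by move=> i _; rewrite mulN1r.
    by rewrite big_split /= prodr_const card_ord.
  rewrite -!natr_prod mulrCA -natrM.
  have -> : (h`! = \prod_(i < f) i.*2.+2 * \prod_(i < g) i.*2.+1)%N.
    have -> : h = f.*2.+1 by rewrite /h /f /g; lia.
    by rewrite factS fact_split /g big_ord_recr /= -/f; ring.
  by rewrite -signr_odd /g /= odd_double /= expr1 mulN1r.
rewrite twoh mul1r in gauss.
have : (2%:R : 'F_p) * h`!%:R == 0 by rewrite mulr_natl mulr2n {1}gauss addNr.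
by rewrite mulf_eq0 (negbTE two0) (negbTE hf0).
Qed.



Lemma coprimez_natE (a b : nat) : coprimez a b = coprime a b.
Proof. by []. Qed.

Lemma div_int (z : int) (N : nat) : (0 < N)%N ->
  (z%:~R / N%:R : rat) \is a Num.int -> (N%:Z %| z)%Z.
Proof.
move=> N0 /intrP [k Hk]; apply/dvdzP; exists k.
have NR : (N%:R : rat) != 0 by rewrite pnatr_eq0 -lt0n.
apply: (@intr_inj rat); rewrite intrM intr_natr -Hk mulfVK //.
Qed.

Ltac intz := repeat match goal with
  | |- is_true ((_ + _) \in _) => apply: rpredD
  | |- is_true ((_ - _) \in _) => apply: rpredB
  | |- is_true ((_ * _) \in _) => apply: rpredM
  | |- is_true ((- _) \in _) => rewrite rpredN
  | |- is_true ((_ ^+ _) \in _) => apply: rpredX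
  | |- is_true ((_%:~R) \in _) => apply: intr_int
  | |- is_true ((_%:R) \in _) => apply: natr_int
  | |- is_true (1 \in _) => apply: rpred1
  | |- is_true (0 \in _) => apply: rpred0
  | |- _ => assumption
  end.

Ltac mx_solve := apply/matrixP => [[[|[|[|[|?]]]] ?] [[|[|[|[|?]]]] ?]] //;
  rewrite !mxE ?sum2 ?sum3 ?sum4 !mxE !inordK //=; try field => //.

Lemma int_eq (x y : rat) : x = y -> y \is a Num.int -> x \is a Num.int.
Proof. by move=> ->. Qed.

Lemma nz2 (x : 'cV[rat]_2) : x != 0 -> x (inord 0) 0 != 0 \/ x (inord 1) 0 != 0.
Proof.
move=> nz; apply/orP; apply: contraNT nz; rewrite negb_or !negbK => /andP[/eqP a /eqP b].
apply/eqP/matrixP => i j; rewrite ord1 mxE -(inord_val i).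
by case: i => [[|[|i]] Hi] //=.
Qed.

Lemma case3 (p r t : nat) : prime p -> (p %% 8 = 3)%N -> (p ^ r = 8 * t + 3)%N ->
  let K := invmx (mxl 2 [:: [:: 2%:R / (8 * t%:R + 3); 1];
                            [:: 1; ((8 * t%:R + 3) + 1) / 2%:R]]) in
  even_posdef_lattice K /\ disc_is_B K p r.
Proof.
move=> pp p8 PE K.
have TZ : (t%:R : rat) \is a Num.int by apply: natr_int.
have T0 : 0 <= (t%:R : rat) by apply: ler0n.
have P0 : 8 * (t%:R : rat) + 3 != 0 by apply: lt0r_neq0; lra.
rewrite /K; set G := mxl 2 _.
set K0 := mxl 2 [:: [:: (8*t%:R+3)*(4*t%:R+2); -(8*t%:R+3)]; [:: -(8*t%:R+3); 2%:R]].
have GK : G *m K0 = 1%:M by rewrite /G /K0; mx_solve.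
rewrite (inv_of GK).
split.
  split.
  - move=> i j; rewrite /K0 mxE -(inord_val i) -(inord_val j).
    case: i => [[|[|i]] Hi] //; case: j => [[|[|j]] Hj] //=; rewrite !inordK //=.
    all: intz.
  - apply/matrixP => i j; rewrite !mxE -(inord_val i) -(inord_val j).
    by case: i => [[|[|i]] Hi] //; case: j => [[|[|j]] Hj] //=; rewrite !inordK.
  - move=> x; rewrite /K0 bformE !sum2 !mxE !inordK //=.
    set a := (x (inord 0) 0)%:~R; set b := (x (inord 1) 0)%:~R.
    have aZ : a \is a Num.int by apply: intr_int.
    have bZ : b \is a Num.int by apply: intr_int.
    apply: (int_eq (y := (8 * t%:R + 3) * (2 * t%:R + 1) * a * a - (8 * t%:R + 3) * a * b + b * b)).
      by field.
    intz.
  - move=> x nz; have H := nz2 nz; rewrite /K0 bformE !sum2 !mxE !inordK //=.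
    move: H; move: (x (inord 0) 0) (x (inord 1) 0) => a b H.
    have [a0|a0] := eqVneq a 0.
      subst a; case: H => [H|b0]; first by exfalso; move: H; rewrite eqxx.
      have h2 : 0 < b ^+ 2 by rewrite exprn_even_gt0.
      nra.
    have h1 : 0 <= (b - (8 * t%:R + 3) * a / 2) ^+ 2 by exact: sqr_ge0.
    have h2 : 0 < a ^+ 2 by rewrite exprn_even_gt0.
    have h3 : 0 <= t%:R * a ^+ 2 by rewrite mulr_ge0 // ltW.
    nra.
exists 1; split.
- by rewrite coprimez_natE coprime1n.
- rewrite mulr1; split; last exact: two_qnr.
  rewrite coprimez_natE coprime2n.
  have : (p %% 2 = 1)%N by rewrite -(modn_dvdm p (isT : (2 %| 8)%N)) p8.
  by rewrite modn2; case: (odd p).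
suff: disc_iso_cyclic K0 (p ^ r) (1%:~R / (p ^ r * 1)%:R) by rewrite muln1.
apply: (@disc_gen _ K0 G (inord 0) (p ^ r) 1 1 1) => //.
- by rewrite PE; lia.
- by rewrite coprimez_natE coprime1n.
- move=> x; rewrite PE; split.
    move/(_ (inord 0)); rewrite /G !mxE sum2 !mxE !inordK //=.
    set a := x (inord 0) 0; set b := x (inord 1) 0 => H.
    have : ((2 * a)%:~R / (8 * t + 3)%:R : rat) \is a Num.int.
      apply: (int_eq (y := 2 / (8 * t%:R + 3) * a%:~R + 1 * b%:~R - b%:~R)).
        by rewrite natrD natrM intrM; field.
      by apply: rpredB => //; apply: intr_int.
    have N0 : (0 < 8 * t + 3)%N by lia.
    move/div_int => /(_ N0); rewrite Gauss_dvdzr // coprimez_natE coprime_sym coprime2n.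
    by rewrite oddD oddM.
  move=> /dvdzP [s Hs] i; rewrite /G -(inord_val i) !mxE sum2 !mxE !inordK //=.
  rewrite Hs intrM intr_natr natrD natrM.
  case: i => [[|[|i]] Hi] //=; rewrite ?inordK //=.
    apply: (int_eq (y := 2 * s%:~R + (x (inord 1) 0)%:~R)); first by field.
    intz.
  apply: (int_eq (y := s%:~R * (8 * t%:R + 3) + (4 * t%:R + 2) * (x (inord 1) 0)%:~R)).
    by field.
  intz.
- move=> x; rewrite PE /G bformE !sum2 !mxE !inordK //=.
  apply: (int_eq (y := (x (inord 0) 0)%:~R * (x (inord 1) 0)%:~R
      + (2 * t%:R + 1) * (x (inord 1) 0)%:~R ^+ 2)).
    by rewrite muln1 natrD natrM !rmorphM /=; field.
  intz.
Qed.

Lemma odd_of8 p k : (p %% 8 = k)%N -> odd k -> odd p.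
Proof.
move=> pk ok.
have : (p %% 2 = k %% 2)%N by rewrite -(modn_dvdm p (isT : (2 %| 8)%N)) pk.
by rewrite !modn2; move: ok; case: (odd p); case: (odd k).
Qed.

Lemma qr4 p : odd p -> is_qr p (2 * 2).
Proof.
move=> op; split; last by exists 2.
have -> : (2 * 2 : int) = Posz (2 ^ 2) by [].
by rewrite coprimez_natE coprime_pexpl // coprime2n.
Qed.

Lemma case7 (p r t : nat) : prime p -> (p %% 8 = 7)%N -> (p ^ r = 8 * t + 7)%N ->
  let K := invmx (mxl 2 [:: [:: 4%:R / (8 * t%:R + 7); 1];
                            [:: 1; ((8 * t%:R + 7) + 1) / 4%:R]]) in
  even_posdef_lattice K /\ disc_is_A K p r.
Proof.
move=> pp p8 PE K.
have op : odd p by apply: (odd_of8 p8).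
have TZ : (t%:R : rat) \is a Num.int by apply: natr_int.
have T0 : 0 <= (t%:R : rat) by apply: ler0n.
have P0 : 8 * (t%:R : rat) + 7 != 0 by apply: lt0r_neq0; lra.
rewrite /K; set G := mxl 2 _.
set K0 := mxl 2 [:: [:: (8*t%:R+7)*(2*t%:R+2); -(8*t%:R+7)]; [:: -(8*t%:R+7); 4%:R]].
have GK : G *m K0 = 1%:M by rewrite /G /K0; mx_solve.
rewrite (inv_of GK).
split.
  split.
  - move=> i j; rewrite /K0 mxE -(inord_val i) -(inord_val j).
    case: i => [[|[|i]] Hi] //; case: j => [[|[|j]] Hj] //=; rewrite !inordK //=.
    all: intz.
  - apply/matrixP => i j; rewrite !mxE -(inord_val i) -(inord_val j).
    by case: i => [[|[|i]] Hi] //; case: j => [[|[|j]] Hj] //=; rewrite !inordK.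
  - move=> x; rewrite /K0 bformE !sum2 !mxE !inordK //=.
    set a := (x (inord 0) 0)%:~R; set b := (x (inord 1) 0)%:~R.
    have aZ : a \is a Num.int by apply: intr_int.
    have bZ : b \is a Num.int by apply: intr_int.
    apply: (int_eq (y := (8 * t%:R + 7) * (t%:R + 1) * a * a - (8 * t%:R + 7) * a * b + 2 * b * b)).
      by field.
    intz.
  - move=> x nz; have H := nz2 nz; rewrite /K0 bformE !sum2 !mxE !inordK //=.
    move: H; move: (x (inord 0) 0) (x (inord 1) 0) => a b H.
    have [a0|a0] := eqVneq a 0.
      subst a; case: H => [H|b0]; first by exfalso; move: H; rewrite eqxx.
      have h2 : 0 < b ^+ 2 by rewrite exprn_even_gt0.
      nra.
    have h1 : 0 <= (2 * b - (8 * t%:R + 7) * a / 2) ^+ 2 by exact: sqr_ge0.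
    have h2 : 0 < a ^+ 2 by rewrite exprn_even_gt0.
    have h3 : 0 <= t%:R * a ^+ 2 by rewrite mulr_ge0 // ltW.
    nra.
exists 2; split.
- by rewrite coprimez_natE coprime2n.
- exact: qr4.
suff: disc_iso_cyclic K0 (p ^ r) (2%:~R / (p ^ r * 1)%:R) by rewrite muln1.
apply: (@disc_gen _ K0 G (inord 0) (p ^ r) 1 2 1) => //.
- by rewrite PE; lia.
- by rewrite coprimez_natE coprime1n.
- move=> x; rewrite PE; split.
    move/(_ (inord 0)); rewrite /G !mxE sum2 !mxE !inordK //=.
    set a := x (inord 0) 0; set b := x (inord 1) 0 => H.
    have : ((4 * a)%:~R / (8 * t + 7)%:R : rat) \is a Num.int.
      apply: (int_eq (y := 4 / (8 * t%:R + 7) * a%:~R + 1 * b%:~R - b%:~R)).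
        by rewrite natrD natrM intrM; field.
      by apply: rpredB => //; apply: intr_int.
    have N0 : (0 < 8 * t + 7)%N by lia.
    move/div_int => /(_ N0); rewrite Gauss_dvdzr //.
    have -> : (4 : int) = Posz (2 ^ 2) by [].
    rewrite coprimez_natE coprime_sym coprime_pexpl // coprime2n.
    by rewrite oddD oddM.
  move=> /dvdzP [s Hs] i; rewrite /G -(inord_val i) !mxE sum2 !mxE !inordK //=.
  rewrite Hs intrM intr_natr natrD natrM.
  case: i => [[|[|i]] Hi] //=; rewrite ?inordK //=.
    apply: (int_eq (y := 4 * s%:~R + (x (inord 1) 0)%:~R)); first by field.
    intz.
  apply: (int_eq (y := s%:~R * (8 * t%:R + 7) + (2 * t%:R + 2) * (x (inord 1) 0)%:~R)).
    by field.
  intz.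
- move=> x; rewrite PE /G bformE !sum2 !mxE !inordK //=.
  apply: (int_eq (y := (x (inord 0) 0)%:~R * (x (inord 1) 0)%:~R
      + (t%:R + 1) * (x (inord 1) 0)%:~R ^+ 2)).
    by rewrite muln1 natrD natrM !rmorphM /=; field.
  intz.
Qed.



Lemma nz4 (x : 'cV[rat]_4) : x != 0 ->
  [\/ x (inord 0) 0 != 0, x (inord 1) 0 != 0, x (inord 2) 0 != 0 | x (inord 3) 0 != 0].
Proof.
move=> nz; apply/or4P; apply: contraNT nz.
rewrite !negb_or !negbK => /and4P[/eqP a /eqP b /eqP c /eqP d].
apply/eqP/matrixP => i j; rewrite ord1 mxE -(inord_val i).
by case: i => [[|[|[|[|i]]]] Hi] //=.
Qed.

Lemma case5 (p r t : nat) : prime p -> (p %% 8 = 5)%N -> (p ^ r = 8 * t + 5)%N ->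
  let K := invmx (mxl 4 [:: [:: 4%:R / (8 * t%:R + 5); 1; 0; 0];
                            [:: 1; ((8 * t%:R + 5) + 3%:R) / 4%:R; 1; 0];
                            [:: 0; 1; 2%:R; 1];
                            [:: 0; 0; 1; 2%:R]]) in
  even_posdef_lattice K /\ disc_is_A K p r.
Proof.
move=> pp p8 PE K.
have op : odd p by apply: (odd_of8 p8).
have TZ : (t%:R : rat) \is a Num.int by apply: natr_int.
have T0 : 0 <= (t%:R : rat) by apply: ler0n.
have P0 : 8 * (t%:R : rat) + 5 != 0 by apply: lt0r_neq0; lra.
rewrite /K; set G := mxl 4 _.
set K0 := mxl 4 [:: [:: (8*t%:R+5)*(6*t%:R+4); -(3*(8*t%:R+5)); 2*(8*t%:R+5); -(8*t%:R+5)];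
                    [:: -(3*(8*t%:R+5)); 12%:R; -(8%:R); 4%:R];
                    [:: 2*(8*t%:R+5); -(8%:R); 6%:R; -(3%:R)];
                    [:: -(8*t%:R+5); 4%:R; -(3%:R); 2%:R]].
have GK : G *m K0 = 1%:M by rewrite /G /K0; mx_solve.
rewrite (inv_of GK).
split.
  split.
  - move=> i j; rewrite /K0 mxE -(inord_val i) -(inord_val j).
    case: i => [[|[|[|[|i]]]] Hi] //; case: j => [[|[|[|[|j]]]] Hj] //=; rewrite !inordK //=.
    all: intz.
  - apply/matrixP => i j; rewrite !mxE -(inord_val i) -(inord_val j).
    by case: i => [[|[|[|[|i]]]] Hi] //; case: j => [[|[|[|[|j]]]] Hj] //=; rewrite !inordK.
  - move=> x; rewrite /K0 bformE !sum4 !mxE !inordK //=.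
    set a := (x (inord 0) 0)%:~R; set b := (x (inord 1) 0)%:~R.
    set c := (x (inord 2) 0)%:~R; set d := (x (inord 3) 0)%:~R.
    have aZ : a \is a Num.int by apply: intr_int.
    have bZ : b \is a Num.int by apply: intr_int.
    have cZ : c \is a Num.int by apply: intr_int.
    have dZ : d \is a Num.int by apply: intr_int.
    apply: (int_eq (y := (8 * t%:R + 5) * (3 * t%:R + 2) * a * a + 6 * b * b + 3 * c * c
       + d * d - 3 * (8 * t%:R + 5) * a * b + 2 * (8 * t%:R + 5) * a * c
       - (8 * t%:R + 5) * a * d - 8 * b * c + 4 * b * d - 3 * c * d)).
      by field.
    intz.
  - move=> x nz; have H := nz4 nz; rewrite /K0 bformE !sum4 !mxE !inordK //=.
    move: H; move: (x (inord 0) 0) (x (inord 1) 0) (x (inord 2) 0) (x (inord 3) 0).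
    move=> a b c d H.
    have [a0|a0] := eqVneq a 0; last first.
      have h1 : 0 <= (d + (- (8 * t%:R + 5) * a + 4 * b - 3 * c) / 2) ^+ 2 by exact: sqr_ge0.
      have h2 : 0 <= (c + ((8 * t%:R + 5) * a - 4 * b) / 3) ^+ 2 by exact: sqr_ge0.
      have h3 : 0 <= (b - (8 * t%:R + 5) * a / 4) ^+ 2 by exact: sqr_ge0.
      have h4 : 0 < a ^+ 2 by rewrite exprn_even_gt0.
      have h5 : 0 <= t%:R * a ^+ 2 by rewrite mulr_ge0 // ltW.
      nra.
    subst a; have [b0|b0] := eqVneq b 0; last first.
      have h1 : 0 <= (d + (4 * b - 3 * c) / 2) ^+ 2 by exact: sqr_ge0.
      have h2 : 0 <= (c - 4 * b / 3) ^+ 2 by exact: sqr_ge0.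
      have h4 : 0 < b ^+ 2 by rewrite exprn_even_gt0.
      nra.
    subst b; have [c0|c0] := eqVneq c 0; last first.
      have h1 : 0 <= (d - 3 * c / 2) ^+ 2 by exact: sqr_ge0.
      have h4 : 0 < c ^+ 2 by rewrite exprn_even_gt0.
      nra.
    subst c; case: H => [H|H|H|d0]; try by exfalso; move: H; rewrite eqxx.
    have h4 : 0 < d ^+ 2 by rewrite exprn_even_gt0.
    nra.
exists 2; split.
- by rewrite coprimez_natE coprime2n.
- exact: qr4.
suff: disc_iso_cyclic K0 (p ^ r) (2%:~R / (p ^ r * 1)%:R) by rewrite muln1.
apply: (@disc_gen _ K0 G (inord 0) (p ^ r) 1 2 1) => //.
- by rewrite PE; lia.
- by rewrite coprimez_natE coprime1n.
- move=> x; rewrite PE; split.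
    move/(_ (inord 0)); rewrite /G !mxE sum4 !mxE !inordK //=.
    set a := x (inord 0) 0; set b := x (inord 1) 0 => H.
    have : ((4 * a)%:~R / (8 * t + 5)%:R : rat) \is a Num.int.
      apply: (int_eq (y := 4 / (8 * t%:R + 5) * a%:~R + 1 * b%:~R
          + 0 * (x (inord 2) 0)%:~R + 0 * (x (inord 3) 0)%:~R - b%:~R)).
        by rewrite natrD natrM intrM; field.
      by apply: rpredB => //; apply: intr_int.
    have N0 : (0 < 8 * t + 5)%N by lia.
    move/div_int => /(_ N0); rewrite Gauss_dvdzr //.
    have -> : (4 : int) = Posz (2 ^ 2) by [].
    rewrite coprimez_natE coprime_sym coprime_pexpl // coprime2n.
    by rewrite oddD oddM.
  move=> /dvdzP [s Hs] i; rewrite /G -(inord_val i) !mxE sum4 !mxE !inordK //=.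
  rewrite Hs intrM intr_natr natrD natrM.
  set b := (x (inord 1) 0)%:~R; set c := (x (inord 2) 0)%:~R; set d := (x (inord 3) 0)%:~R.
  have bZ : b \is a Num.int by apply: intr_int.
  have cZ : c \is a Num.int by apply: intr_int.
  have dZ : d \is a Num.int by apply: intr_int.
  case: i => [[|[|[|[|i]]]] Hi] //=; rewrite ?inordK //=.
  - apply: (int_eq (y := 4 * s%:~R + b)); first by field.
    intz.
  - apply: (int_eq (y := s%:~R * (8 * t%:R + 5) + (2 * t%:R + 2) * b + c)).
      by field.
    intz.
  - apply: (int_eq (y := b + 2 * c + d)); first by field.
    intz.
  - apply: (int_eq (y := c + 2 * d)); first by field.
    intz.
- move=> x; rewrite PE /G bformE !sum4 !mxE !inordK //=.
  set a := (x (inord 0) 0)%:~R; set b := (x (inord 1) 0)%:~R.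
  set c := (x (inord 2) 0)%:~R; set d := (x (inord 3) 0)%:~R.
  have aZ : a \is a Num.int by apply: intr_int.
  have bZ : b \is a Num.int by apply: intr_int.
  have cZ : c \is a Num.int by apply: intr_int.
  have dZ : d \is a Num.int by apply: intr_int.
  apply: (int_eq (y := a * b + (t%:R + 1) * b ^+ 2 + b * c + c ^+ 2 + c * d + d ^+ 2)).
    by rewrite muln1 natrD natrM !rmorphM /= -/a; field.
  intz.
Qed.



Lemma nz3 (x : 'cV[rat]_3) : x != 0 ->
  [\/ x (inord 0) 0 != 0, x (inord 1) 0 != 0 | x (inord 2) 0 != 0].
Proof.
move=> nz; apply/or3P; apply: contraNT nz.
rewrite !negb_or !negbK => /and3P[/eqP a /eqP b /eqP c].
apply/eqP/matrixP => i j; rewrite ord1 mxE -(inord_val i).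
by case: i => [[|[|[|i]]] Hi] //=.
Qed.

Lemma oddz (d : int) : odd `|(2 * d + 1)%R|%N.
Proof.
have : exists k : nat, `|(2 * d + 1)%R|%N = (2 * k + 1)%N.
  case: (leP 0 d) => d0; [exists `|d|%N | exists `|(d + 1)%R|%N]; lia.
case=> k ->; by rewrite oddD oddM.
Qed.

Lemma coprimezE (m : int) (N : nat) : coprimez m N = coprime `|m| N.
Proof. by []. Qed.

Lemma hensel (j : nat) : exists d t : int,
  5 * (2 * d + 1) ^+ 2 + 3 = (8 * 2 ^ j)%N%:Z * t.
Proof.
elim: j => [|j [d [t IH]]]; first by exists 0, 1.
have Ht := divz_eq t 2.
have : (0 <= (t %% 2)%Z < 2)%R by rewrite modz_ge0 // ltz_pmod.
move: Ht; set s := (t %/ 2)%Z; case: (t %% 2)%Z => [[|[|n]]|n] //= Ht _.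
- exists d, s; rewrite IH Ht expnS !PoszM; ring.
- exists (d + (2 ^ j.+1)%N%:Z), (s + 5 * d + 3 + 5 * (2 ^ j)%N%:Z).
  move: IH; rewrite !expnS !PoszM; set X := Posz (2 ^ j) => IH.
  have E : 5 * (2 * (d + Posz 2 * X) + 1) ^+ 2 + 3
       = (5 * (2 * d + 1) ^+ 2 + 3) + 40 * X * (2 * d + 1) + 80 * X ^+ 2 by ring.
  rewrite E IH Ht; ring.
Qed.

Lemma caseD (r v : nat) : (2 <= r)%N -> (2 ^ r = 6 * v + 4)%N ->
  let K := invmx (mxl 3 [:: [:: 3%:R / (6 * v%:R + 4); 1; 0];
                            [:: 1; ((6 * v%:R + 4) + 2%:R) / 3%:R; 1];
                            [:: 0; 1; 2%:R]]) in
  even_posdef_lattice K /\ disc_is_D K r.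
Proof.
move=> r2 PE K.
have TZ : (v%:R : rat) \is a Num.int by apply: natr_int.
have T0 : 0 <= (v%:R : rat) by apply: ler0n.
have P0 : 6 * (v%:R : rat) + 4 != 0 by apply: lt0r_neq0; lra.
rewrite /K; set G := mxl 3 _.
set K0 := mxl 3 [:: [:: (6*v%:R+4)*(4*v%:R+3); -(2*(6*v%:R+4)); 6*v%:R+4];
                    [:: -(2*(6*v%:R+4)); 6%:R; -(3%:R)];
                    [:: 6*v%:R+4; -(3%:R); 2%:R]].
have GK : G *m K0 = 1%:M by rewrite /G /K0; mx_solve.
rewrite (inv_of GK).
split.
  split.
  - move=> i j; rewrite /K0 mxE -(inord_val i) -(inord_val j).
    case: i => [[|[|[|i]]] Hi] //; case: j => [[|[|[|j]]] Hj] //=; rewrite !inordK //=.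
    all: intz.
  - apply/matrixP => i j; rewrite !mxE -(inord_val i) -(inord_val j).
    by case: i => [[|[|[|i]]] Hi] //; case: j => [[|[|[|j]]] Hj] //=; rewrite !inordK.
  - move=> x; rewrite /K0 bformE !sum3 !mxE !inordK //=.
    set a := (x (inord 0) 0)%:~R; set b := (x (inord 1) 0)%:~R.
    set c := (x (inord 2) 0)%:~R.
    have aZ : a \is a Num.int by apply: intr_int.
    have bZ : b \is a Num.int by apply: intr_int.
    have cZ : c \is a Num.int by apply: intr_int.
    apply: (int_eq (y := (3 * v%:R + 2) * (4 * v%:R + 3) * a * a + 3 * b * b + c * c
       - 2 * (6 * v%:R + 4) * a * b + (6 * v%:R + 4) * a * c - 3 * b * c)).
      by field.
    intz.
  - move=> x nz; have H := nz3 nz; rewrite /K0 bformE !sum3 !mxE !inordK //=.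
    move: H; move: (x (inord 0) 0) (x (inord 1) 0) (x (inord 2) 0).
    move=> a b c H.
    have [a0|a0] := eqVneq a 0; last first.
      have h1 : 0 <= (c + ((6 * v%:R + 4) * a - 3 * b) / 2) ^+ 2 by exact: sqr_ge0.
      have h2 : 0 <= (b - (6 * v%:R + 4) * a / 3) ^+ 2 by exact: sqr_ge0.
      have h4 : 0 < a ^+ 2 by rewrite exprn_even_gt0.
      have h5 : 0 <= v%:R * a ^+ 2 by rewrite mulr_ge0 // ltW.
      nra.
    subst a; have [b0|b0] := eqVneq b 0; last first.
      have h1 : 0 <= (c - 3 * b / 2) ^+ 2 by exact: sqr_ge0.
      have h4 : 0 < b ^+ 2 by rewrite exprn_even_gt0.
      nra.
    subst b; case: H => [H|H|c0]; try by exfalso; move: H; rewrite eqxx.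
    have h4 : 0 < c ^+ 2 by rewrite exprn_even_gt0.
    nra.
rewrite /disc_is_D.
have -> : (- 5%:R / (2 ^ r.+1)%:R : rat) = (- 5%:Z)%:~R / (2 ^ r * 2)%:R.
  by rewrite expnSr rmorphN /= intr_natr.
have [d [k Hk]] := hensel (r - 2).
have Hk' : 5 * (2 * d + 1) ^+ 2 + 3 = (2 * (6 * v + 4))%N%:Z * k.
  rewrite Hk; congr (Posz _ * _); rewrite -PE.
  have -> : r = ((r - 2) + 2)%N by rewrite subnK.
  by rewrite addnK expnD; lia.
apply: (@disc_gen _ K0 G (inord 0) (2 ^ r) 2 (- 5%:Z) (2 * d + 1)) => //.
- by rewrite PE; lia.
- by rewrite PE; apply/dvdnP; exists (3 * v + 2)%N; lia.
- rewrite coprimezE coprime_pexpr; last by lia.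
  by rewrite coprime_sym coprime2n oddz.
- move=> x; split.
    move/(_ (inord 0)); rewrite /G !mxE sum3 !mxE !inordK //=.
    set a := x (inord 0) 0; set b := x (inord 1) 0 => H.
    have : ((3 * a)%:~R / (2 ^ r)%:R : rat) \is a Num.int.
      apply: (int_eq (y := 3 / (6 * v%:R + 4) * a%:~R + 1 * b%:~R
          + 0 * (x (inord 2) 0)%:~R - b%:~R)).
        by rewrite PE natrD natrM intrM; field.
      by apply: rpredB => //; apply: intr_int.
    move/div_int => /(_ (expn_gt0 _ _)); rewrite Gauss_dvdzr //.
    rewrite coprimez_natE coprime_pexpl; last by lia.
    by [].
  move=> /dvdzP [s Hs] i; rewrite /G -(inord_val i) !mxE sum3 !mxE !inordK //=.
  rewrite Hs intrM intr_natr PE natrD natrM.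
  set b := (x (inord 1) 0)%:~R; set c := (x (inord 2) 0)%:~R.
  have bZ : b \is a Num.int by apply: intr_int.
  have cZ : c \is a Num.int by apply: intr_int.
  case: i => [[|[|[|i]]] Hi] //=; rewrite ?inordK //=.
  - apply: (int_eq (y := 3 * s%:~R + b)); first by field.
    intz.
  - apply: (int_eq (y := s%:~R * (6 * v%:R + 4) + (2 * v%:R + 2) * b + c)).
      by field.
    intz.
  - apply: (int_eq (y := b + 2 * c)); first by field.
    intz.
- move=> x; rewrite /G bformE !sum3 !mxE !inordK //=.
  have -> : - 5%:Z * (2 * d + 1) ^+ 2 * x (inord 0) 0 ^+ 2
      = (3 - (2 * (6 * v + 4))%N%:Z * k) * x (inord 0) 0 ^+ 2.
    by rewrite -Hk'; ring.
  set a := (x (inord 0) 0)%:~R; set b := (x (inord 1) 0)%:~R.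
  set c := (x (inord 2) 0)%:~R.
  have aZ : a \is a Num.int by apply: intr_int.
  have bZ : b \is a Num.int by apply: intr_int.
  have cZ : c \is a Num.int by apply: intr_int.
  have kZ : (k%:~R : rat) \is a Num.int by apply: intr_int.
  apply: (int_eq (y := k%:~R * a ^+ 2 + a * b + (v%:R + 1) * b ^+ 2 + b * c + c ^+ 2)).
    have E2 : ((Posz (2 * (6 * v + 4))%N)%:~R : rat) = 2 * (6 * v%:R + 4).
      by rewrite intr_natr natrM natrD natrM.
    move: E2; move: (Posz (2 * (6 * v + 4))%N) => M E2.
    have E3 : (((6 * v + 4) * 2)%N%:R : rat) = (6 * v%:R + 4) * 2.
      by rewrite natrM natrD natrM.
    have E4 : ((3 : int)%:~R : rat) = 3 by rewrite intr_natr.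
    rewrite PE E3 intrM intrB intrM expr2 intrM -/a E2 E4.
    by field.
  intz.
Qed.



Lemma pow_mod8 p r : odd r -> ((p %% 8) ^ 2 %% 8 = 1)%N -> (p ^ r %% 8 = p %% 8)%N.
Proof.
move=> or h.
have -> : r = (r./2).*2.+1 by rewrite -[LHS]odd_double_half or.
elim: (r./2) => [|k IH]; first by rewrite expn1.
have -> : (p ^ (k.+1).*2.+1 = p ^ 2 * p ^ k.*2.+1)%N.
  by rewrite -expnD; congr (_ ^ _)%N; rewrite doubleS.
by rewrite -modnMm IH -modnXm h mul1n modn_mod.
Qed.

Lemma pow_mod6 r : ~~ odd r -> (2 <= r)%N -> (2 ^ r %% 6 = 4)%N.
Proof.
move=> er r2.
have : r = (r./2).*2 by rewrite -[LHS]odd_double_half (negbTE er).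
have : (0 < r./2)%N by move: r2; rewrite -{1}[r]odd_double_half (negbTE er); lia.
case: (r./2) => // k _ ->.
elim: k => [//|k IH].
have -> : (2 ^ (k.+2).*2 = 4 * 2 ^ (k.+1).*2)%N.
  by rewrite -[4%N]/(2 ^ 2)%N -expnD; congr (_ ^ _)%N; rewrite !doubleS; lia.
by rewrite -modnMm IH.
Qed.

Theorem mainTheorem6 :
  (forall p r : nat, prime p -> odd p -> odd r ->
    let P : rat := (p ^ r)%:R in
    [/\ (p %% 8 = 7)%N ->
          (let K := invmx (mxl 2 [:: [:: 4%:R / P; 1];
                                     [:: 1; (P + 1) / 4%:R]]) in
           even_posdef_lattice K /\ disc_is_A K p r),
        (p %% 8 = 5)%N ->
          (let K := invmx (mxl 4 [:: [:: 4%:R / P; 1; 0; 0];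
                                     [:: 1; (P + 3%:R) / 4%:R; 1; 0];
                                     [:: 0; 1; 2%:R; 1];
                                     [:: 0; 0; 1; 2%:R]]) in
           even_posdef_lattice K /\ disc_is_A K p r)
      & (p %% 8 = 3)%N ->
          (let K := invmx (mxl 2 [:: [:: 2%:R / P; 1];
                                     [:: 1; (P + 1) / 2%:R]]) in
           even_posdef_lattice K /\ disc_is_B K p r)]) /\
  (forall r : nat, ~~ odd r -> (2 <= r)%N ->
    let Q : rat := (2 ^ r)%:R in
    let K := invmx (mxl 3 [:: [:: 3%:R / Q; 1; 0];
                              [:: 1; (Q + 2%:R) / 3%:R; 1];
                              [:: 0; 1; 2%:R]]) in
    even_posdef_lattice K /\ disc_is_D K r).
Proof.
split.
  move=> p r pp op or P.
  have PE8 : forall k, (p %% 8 = k)%N -> (k ^ 2 %% 8 = 1)%N ->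
      (p ^ r = 8 * (p ^ r %/ 8) + k)%N.
    move=> k pk h; rewrite {1}(divn_eq (p ^ r) 8) pow_mod8 ?pk //; lia.
  split => p8.
  - have PE := PE8 _ p8 erefl.
    have PR : P = 8 * (p ^ r %/ 8)%N%:R + 7 by rewrite /P {1}PE natrD natrM.
    rewrite PR; exact: case7 pp p8 PE.
  - have PE := PE8 _ p8 erefl.
    have PR : P = 8 * (p ^ r %/ 8)%N%:R + 5 by rewrite /P {1}PE natrD natrM.
    rewrite PR; exact: case5 pp p8 PE.
  - have PE := PE8 _ p8 erefl.
    have PR : P = 8 * (p ^ r %/ 8)%N%:R + 3 by rewrite /P {1}PE natrD natrM.
    rewrite PR; exact: case3 pp p8 PE.
move=> r er r2 Q.
have PE : (2 ^ r = 6 * (2 ^ r %/ 6) + 4)%N.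
  by rewrite {1}(divn_eq (2 ^ r) 6) pow_mod6 //; lia.
have QR : Q = 6 * (2 ^ r %/ 6)%N%:R + 4 by rewrite /Q {1}PE natrD natrM.
rewrite QR; exact: caseD r2 PE.
Qed.
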